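(* Let $\mathcal L$ be a finite distributive lattice of rank $r$, let $0\le i\le j\le r$, and let $\mathcal L_{i,j}=\{p\in\mathcal L: i\le\operatorname{rank}p\le j\}$. Then there exist a poset ideal $\mathcal I$ and a poset coideal $\mathcal J$ of $\mathcal L$ such that $H_{\mathcal L_{i,j}}=H_{\mathcal I\cap\mathcal J}=H_{\mathcal I}\cap H_{\mathcal J}$.
   Context: A finite distributive lattice is graded: all maximal chains have the same length $r$ (its rank), and $\operatorname{rank}p$ denotes the rank function value of $p$ ($0$ at the minimum, increasing by $1$ along cover relations). Let $P$ be the set of join-irreducible elements of $\mathcal L$ (elements with exactly one lower neighbor); for $p\in\mathcal L$ put $\ell(p)=\{q\in P:q\le p\}$. Let $K$ be a field, $S=K[x_p,y_p:p\in P]$, $u_q=\prod_{p\in\ell(q)}x_p\prod_{p\in P\setminus\ell(q)}y_p$, and for $\mathcal S\subseteq\mathcal L$ let $H_{\mathcal S}=(u_q:q\in\mathcal S)$. Poset ideals are closed downward, poset coideals upward. *)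

(* Defs.v *)
From HB Require Import structures.
From mathcomp Require Import all_boot all_order all_algebra.
From mathcomp Require Import mpoly.
Set Implicit Arguments. Unset Strict Implicit. Unset Printing Implicit Defensive.
Import Order.TTheory GRing.Theory.
Local Open Scope order_scope.

Section Lattice.
Context {disp : Order.disp_t} {T : finTBDistrLatticeType disp}.

Definition covers (x y : T) : bool :=
  (x < y) && [forall z : T, ~~ ((x < z) && (z < y))].

Definition chain_of_length (n : nat) (p : T) : bool :=
  [exists s : n.-tuple T, path covers \bot (val s) && (last \bot (val s) == p)].

(* rank p: length of a (maximal) saturated chain from \bot to p; since a finite
   distributive lattice is graded, all such chains have the same length, and we
   take the maximum, which exists since chain lengths are < #|T| *)
Definition rank (p : T) : nat :=
  \max_(n < #|T| | chain_of_length n p) n.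

Definition join_irr (p : T) : bool := #|[set q : T | covers q p]| == 1%N.

Definition poset_ideal (I : {set T}) : Prop :=
  forall p q : T, q <= p -> p \in I -> q \in I.
Definition poset_coideal (J : {set T}) : Prop :=
  forall p q : T, p <= q -> p \in J -> q \in J.

Definition rank_slice (i j : nat) : {set T} :=
  [set p : T | (i <= rank p)%N && (rank p <= j)%N].
End Lattice.

Notation JI T := {p : T | join_irr p}.
(* the variables: (true, p) ~ x_p and (false, p) ~ y_p *)
Notation Var T := (bool * JI T)%type.
Notation Sring K T := {mpoly K[#|{: Var T}|]}.

Section Ideals.
Context {disp : Order.disp_t} {T : finTBDistrLatticeType disp} (K : fieldType).

Definition xvar (p : JI T) : Sring K T := 'X_(enum_rank ((true, p) : Var T)).
Definition yvar (p : JI T) : Sring K T := 'X_(enum_rank ((false, p) : Var T)).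

Definition umon (q : T) : Sring K T :=
  (\prod_(p : JI T) (if (val p <= q)%O then xvar p else yvar p))%R.

Definition inH (Sset : {set T}) (f : Sring K T) : Prop :=
  exists g : T -> Sring K T, f = (\sum_(q in Sset) g q * umon q)%R.
End Ideals.

(* Main.v *)
Require Import Defs.
From HB Require Import structures.
From mathcomp Require Import all_boot all_order all_algebra.
From mathcomp Require Import mpoly.
From mathcomp Require Import zify.
Set Implicit Arguments. Unset Strict Implicit. Unset Printing Implicit Defensive.
From mathcomp Require Import zify.
Import Order.TTheory GRing.Theory.
Section Lat.
Local Open Scope order_scope.
Context {disp : Order.disp_t} {T : finTBDistrLatticeType disp}.
Implicit Types (x y z a b c p q : T).

Lemma coversP x y : reflect (x < y /\ forall z, ~~ ((x < z) && (z < y))) (covers x y).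
Proof.
apply: (iffP andP) => [[h /forallP H]|[h H]]; split => //; exact/forallP.
Qed.

Lemma covers_lt x y : covers x y -> x < y.
Proof. by case/andP. Qed.

Lemma chainP n p : reflect (exists s : seq T, [/\ size s = n, path covers \bot s & last \bot s = p])
  (chain_of_length n p).
Proof.
apply: (iffP existsP) => [[s /andP[h /eqP e]] | [s [sz h e]]].
  by exists (val s); rewrite size_tuple.
subst n; exists (in_tuple s); by rewrite /= h e eqxx.
Qed.

Lemma path_covers_size x s : path covers x s -> (size s < #|T|)%N.
Proof.
move=> h.
have hs : sorted <%O (x :: s) by rewrite /=; apply: sub_path h => u v /covers_lt.
have u := lt_sorted_uniq hs.
have := max_card (mem (x :: s)).
by rewrite (card_uniqP u).
Qed.

Lemma rank_ge n p : chain_of_length n p -> (n <= rank p)%N.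
Proof.
move=> h; have hn : (n < #|T|)%N.
  by case/chainP: h => s [<- hp _]; exact: path_covers_size hp.
exact: (@leq_bigmax_cond _ (fun k : 'I_#|T| => chain_of_length k p) (fun k => nat_of_ord k) (Ordinal hn)).
Qed.

Lemma rank_chain_ex n p : chain_of_length n p -> chain_of_length (rank p) p.
Proof.
move=> h; have hn : (n < #|T|)%N.
  by case/chainP: h => s [<- hp _]; exact: path_covers_size hp.
have A0 : (0 < #|[pred k : 'I_#|T| | chain_of_length k p]|)%N.
  by apply/card_gt0P; exists (Ordinal hn).
case: (eq_bigmax_cond (fun k => nat_of_ord k) A0) => k hk e.
by rewrite /rank; rewrite e.
Qed.

Lemma cover_below x y : x < y -> exists2 z, x <= z & covers z y.
Proof.
have [n] := ubnP #|[set w | (x <= w) && (w < y)]|.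
elim: n x => // n IH x hn hxy.
case: (boolP (covers x y)) => hc; first by exists x.
have : ~~ [forall z, ~~ ((x < z) && (z < y))] by move: hc; rewrite /covers hxy.
rewrite negb_forall => /existsP[z]; rewrite negbK => /andP[hxz hzy].
have hlt : (#|[set w | (z <= w)%O && (w < y)%O]| < n)%N.
  rewrite ltnS in hn; apply: (leq_trans _ hn); apply: proper_card; apply/properP; split.
    by apply/subsetP => w; rewrite !inE => /andP[h1 ->]; rewrite (le_trans (ltW hxz) h1).
  by exists x; rewrite !inE ?lexx ?hxy //= lt_geF.
have [z' hz' hc'] := IH z hlt hzy.
by exists z' => //; exact: le_trans (ltW hxz) hz'.
Qed.

Lemma sat_chain x y : x <= y -> exists t : seq T, path covers x t && (last x t == y).
Proof.
have [n] := ubnP #|[set w | w < y]|.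
elim: n y => // n IH y hn hxy.
case: (eqVneq x y) => [->|hne]; first by exists [::]; rewrite /= eqxx.
have hlt : x < y by rewrite lt_neqAle hne.
have [z hxz hzy] := cover_below hlt.
have hlt' : (#|[set w | (w < z)%O]| < n)%N.
  rewrite ltnS in hn; apply: (leq_trans _ hn); apply: proper_card; apply/properP; split.
    by apply/subsetP => w; rewrite !inE => h; exact: lt_trans h (covers_lt hzy).
  by exists z; rewrite !inE ?ltxx ?(covers_lt hzy).
have [t /andP[ht /eqP ht']] := IH z hlt' hxz.
exists (rcons t y); by rewrite rcons_path ht ht' hzy last_rcons eqxx.
Qed.

Lemma rank_chain p : chain_of_length (rank p) p.
Proof.
have [t /andP[ht /eqP ht']] := sat_chain (le0x p).
apply: (@rank_chain_ex (size t)); apply/chainP; by exists t.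
Qed.

Lemma rank_cover x y : covers x y -> ((rank x).+1 <= rank y)%N.
Proof.
move=> hc; case/chainP: (rank_chain x) => s [hs hp hl].
apply: rank_ge; apply/chainP; exists (rcons s y).
by rewrite size_rcons hs rcons_path hp hl hc last_rcons.
Qed.

Lemma rank_mono x y : x <= y -> (rank x <= rank y)%N.
Proof.
move=> hxy; case/chainP: (rank_chain x) => s [hs hp hl].
have [t /andP[ht /eqP ht']] := sat_chain hxy.
apply: leq_trans (rank_ge _); last first.
  apply/chainP; exists (s ++ t); split; first reflexivity.
    by rewrite cat_path hp hl ht.
  by rewrite last_cat hl.
by rewrite size_cat hs leq_addr.
Qed.

Lemma diamond a b c : covers a b -> covers c b -> a != c -> covers (a `&` c) a.
Proof.
move=> hab hcb hac; apply/coversP; split.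
  rewrite lt_neqAle leIl andbT; apply/eqP => e.
  have hle : a <= c by apply/meet_idPl.
  have : a < c by rewrite lt_neqAle hac.
  move=> h; case/coversP: hab => _ /(_ c); by rewrite h (covers_lt hcb).
move=> z; apply/negP => /andP[h1 h2].
have zb : z < b := lt_trans h2 (covers_lt hab).
have hc1 : c <= z `|` c by rewrite leUr.
have hc2 : z `|` c <= b by rewrite leUx (ltW zb) (ltW (covers_lt hcb)).
case/coversP: hcb => _ /(_ (z `|` c)).
rewrite !lt_neqAle hc1 hc2 !andbT.
case: (eqVneq c (z `|` c)) => [e|ne1]; last first.
  case: (eqVneq (z `|` c) b) => [e|ne2] //= _.
  have : a `&` (z `|` c) = z.
    rewrite meetUr (meet_r (ltW h2)).
    by apply/join_idPl; rewrite ltW.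
  by rewrite e (meet_l (ltW (covers_lt hab))) => ez; move: h2; rewrite ez ltxx.
move=> _.
have hzc : z <= c by rewrite e leUl.
have : z <= a `&` c by rewrite lexI hzc ltW.
by move=> h3; move: (lt_le_trans h1 h3); rewrite ltxx.
Qed.

Lemma rank_cover_le a b : covers a b -> (rank b <= (rank a).+1)%N.
Proof.
have [n] := ubnP (rank b).
elim: n a b => // n IH a b hn hab.
case/chainP: (rank_chain b) => s [hs hp hl].
case/lastP: s hs hp hl => [|s' c'].
  by move=> <-.
rewrite size_rcons rcons_path last_rcons => hs /andP[hp' hc] e; subst c'.
set c := last \bot s' in hc.
have h1 : (size s' <= rank c)%N by apply: rank_ge; apply/chainP; exists s'.
have h2 := rank_cover hc.
case: (eqVneq a c) => [->|hac]; first by lia.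
have hd1 := diamond hab hc hac.
have hd2 : covers (a `&` c) c.
  by rewrite meetC; apply: diamond hc hab _; rewrite eq_sym.
have := IH _ _ _ hd2; have := rank_cover hd1; lia.
Qed.

Lemma join_prime a p q : join_irr a -> a <= p `|` q -> (a <= p) || (a <= q).
Proof.
move=> ja h; apply/negPn/negP; rewrite negb_or => /andP[np nq].
have lt1 : a `&` p < a.
  by rewrite lt_neqAle leIl andbT; apply: contra np => /eqP/meet_idPl.
have lt2 : a `&` q < a.
  by rewrite lt_neqAle leIl andbT; apply: contra nq => /eqP/meet_idPl.
have [z1 hz1 c1] := cover_below lt1.
have [z2 hz2 c2] := cover_below lt2.
case/cards1P: ja => c hc.
have : z1 \in [set q0 | covers q0 a] by rewrite inE.
have : z2 \in [set q0 | covers q0 a] by rewrite inE.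
rewrite hc !inE => /eqP e2 /eqP e1.
have : a <= z1.
  by rewrite -{1}(meet_l h) meetUr leUx hz1 e1 -e2 hz2.
by move=> h3; move: (lt_le_trans (covers_lt c1) h3); rewrite ltxx.
Qed.

Lemma interval_ji a p q s : join_irr a -> p `&` q <= s -> s <= p `|` q ->
  ((a <= s) == (a <= p)) || ((a <= s) == (a <= q)).
Proof.
move=> ja h1 h2; case: (boolP (a <= s)) => h.
  by case/orP: (join_prime ja (le_trans h h2)) => ->; rewrite ?orbT.
have : ~~ (a <= p `&` q) by apply: contra h => h'; exact: le_trans h' h1.
by rewrite lexI negb_and => /orP[] /negPf ->; rewrite ?orbT.
Qed.

Lemma path_le_last x t : path covers x t -> x <= last x t.
Proof.
elim: t x => [|z t IH] x /=; first by rewrite lexx.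
by case/andP => h /IH; apply: le_trans; exact: ltW (covers_lt h).
Qed.

Lemma ivt x t k : path covers x t -> (rank x <= k <= rank (last x t))%N ->
  exists s, [/\ x <= s, s <= last x t & rank s = k].
Proof.
elim: t x => [|z t IH] x /=.
  move=> _ hk; exists x; split; [exact: lexx | exact: lexx | by apply/eqP; rewrite eqn_leq].
case/andP => hxz hp /andP[hk1 hk2].
case: (eqVneq (rank x) k) => [e|ne].
  exists x; split => //; apply: le_trans (ltW (covers_lt hxz)) (path_le_last hp).
have := rank_cover_le hxz; have := rank_cover hxz => r1 r2.
have [|s [hs1 hs2 hs3]] := IH z hp.
  by rewrite hk2 andbT; lia.
by exists s; split => //; exact: le_trans (ltW (covers_lt hxz)) hs1.
Qed.
End Lat.
Section P.
Local Open Scope ring_scope.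
Context {disp : Order.disp_t} {T : finTBDistrLatticeType disp} (K : fieldType).
Local Notation n := #|{: Var T}|.
Definition mu (q : T) : 'X_{1..n} :=
  (\big[+%MM/0%MM]_(p : JI T) U_(enum_rank (((val p <= q)%O, p) : Var T)))%MM.

Lemma umonE q : umon K q = 'X_[mu q].
Proof.
rewrite /umon /mu -mprodXE; apply: eq_bigr => p _.
by rewrite /xvar /yvar; case: ifP.
Qed.

Lemma muE q b (a : JI T) : mu q (enum_rank ((b, a) : Var T)) = (b == (val a <= q)%O) :> nat.
Proof.
rewrite /mu mnm_sumE (bigD1 a) //= big1 => [|p hp].
  by rewrite mnm1E (inj_eq enum_rank_inj) xpair_eqE eqxx andbT addn0 eq_sym.
rewrite mnm1E (inj_eq enum_rank_inj) xpair_eqE.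
by rewrite (negPf hp) andbF.
Qed.

Lemma inH_supp (S : {set T}) (f : Sring K T) : inH S f ->
  forall m, m \in msupp f -> exists2 q, q \in S & (mu q <= m)%MM.
Proof.
case=> g -> m /msupp_sum_le /flattenP [l /mapP [q hq ->]] hm.
move: hq; rewrite mem_filter => /andP[qS _].
move: hm; rewrite umonE (perm_mem (msuppMX _ _)) => /mapP [m' _ ->].
by exists q => //; exact: lem_addr.
Qed.

Lemma supp_inH (S : {set T}) (f : Sring K T) :
  (forall m, m \in msupp f -> exists2 q, q \in S & (mu q <= m)%MM) -> inH S f.
Proof.
move=> H.
pose pk m := [pick q in S | (mu q <= m)%MM].
exists (fun q => \sum_(m <- msupp f) (if pk m == Some q then f@_m *: 'X_[m - mu q] else 0)).
rewrite {1}[f]mpolyE.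
under [RHS]eq_bigr do rewrite umonE mulr_suml.
rewrite exchange_big /=; apply: eq_big_seq => m hm.
have [q0 [e hq0 hle]] : exists q0, [/\ pk m = Some q0, q0 \in S & (mu q0 <= m)%MM].
  rewrite /pk; case: pickP => [q0 /andP[h1 h2]|h0]; first by exists q0.
  by have [q hq hq'] := H m hm; move: (h0 q); rewrite hq hq'.
rewrite (bigD1 q0) //= big1 => [|q /andP[_ hq]].
  by rewrite e eqxx -scalerAl -mpolyXD submK // addr0.
by rewrite e (inj_eq (@Some_inj _)) eq_sym (negPf hq) mul0r.
Qed.
End P.

Section Main.
Context {disp : Order.disp_t} {T : finTBDistrLatticeType disp} (K : fieldType).

Lemma inH_sub (S1 S2 : {set T}) (f : Sring K T) : S1 \subset S2 -> inH S1 f -> inH S2 f.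
Proof.
move=> hs [g ->]; exists (fun q => if q \in S1 then g q else 0%R).
rewrite [RHS](eq_bigr (fun q => if q \in S1 then (g q * umon K q)%R else 0%R)); last first.
  move=> q _; case: (q \in S1); [done | by rewrite GRing.mul0r].
rewrite -big_mkcondr; apply: eq_bigl => q.
by case: (boolP (q \in S1)) => h; rewrite ?andbF // (subsetP hs _ h).
Qed.
End Main.

Unset Implicit Arguments.
Theorem lemma3p13 (disp : Order.disp_t) (T : finTBDistrLatticeType disp)
  (K : fieldType) (i j : nat) :
  (i <= j)%N -> (j <= rank (\top : T)%O)%N ->
  exists (I J : {set T}),
    poset_ideal I /\ poset_coideal J /\
    (forall f : Sring K T,
       (inH (rank_slice i j) f <-> inH (I :&: J) f) /\
       (inH (I :&: J) f <-> (inH I f /\ inH J f))).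
Proof.
move=> hij hjr.
exists [set p : T | (rank p <= j)%N], [set p : T | (i <= rank p)%N].
split.
  by move=> p q hqp; rewrite !inE => h; exact: leq_trans (rank_mono hqp) h.
split.
  by move=> p q hpq; rewrite !inE => h; exact: leq_trans h (rank_mono hpq).
have eS : [set p : T | (rank p <= j)%N] :&: [set p | (i <= rank p)%N] = rank_slice i j.
  by apply/setP => p; rewrite !inE andbC.
move=> f; rewrite eS; split; first by [].
split.
  move=> h; split; apply: inH_sub h; apply/subsetP => p; rewrite !inE => /andP[] //.
case=> hI hJ; apply: supp_inH => m hm.
have [p hp hpm] := inH_supp hI hm; have [q hq hqm] := inH_supp hJ hm.
rewrite !inE in hp hq.
have [s [h1 h2 h3]] : exists s, [/\ (p `&` q <= s)%O, (s <= p `|` q)%O & s \in rank_slice i j].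
  case: (leqP i (rank p)) => hip.
    by exists p; rewrite leIl leUl inE hip hp.
  case: (leqP (rank q) j) => hqj.
    by exists q; rewrite leIr leUr inE hqj hq.
  have [t /andP[ht /eqP ht']] := sat_chain (leUl p q).
  have hq' := rank_mono (leUr q p).
  have [|s [s1 s2 s3]] := ivt (k:=i) ht.
    by rewrite ht'; apply/andP; split; lia.
  exists s; split.
  - exact: le_trans (leIl p q) s1.
  - by rewrite -ht'.
  - by rewrite inE s3 leqnn hij.
exists s => //; apply/mnm_lepP => k; rewrite -(enum_valK k).
case: (enum_val k) => b a.
have hk1 := mnm_lepP hpm (enum_rank ((b, a) : Var T)).
have hk2 := mnm_lepP hqm (enum_rank ((b, a) : Var T)).
rewrite muE in hk1; rewrite muE in hk2; rewrite muE.
by case/orP: (interval_ji (valP a) h1 h2) => /eqP ->.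
Qed.
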